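(* Let $\mu>0$, $\lambda\in(0,1)$, $a_{b1},a_{b2}\in[-1,1]$ and $b>0$. Consider a single agent moving according to the closed-loop dynamics of Configuration I (see context), and call a state a circling equilibrium if $\rho_{1b1},\rho_{1b2}>0$, the agent is not collinear with the two beacons, and the time derivatives of the four shape variables $\bar x_{1b1},\bar x_{1b2},\rho_{1b1},\rho_{1b2}$ all vanish. Then a circling equilibrium exists if and only if one of the following holds, and at any circling equilibrium $\bar x_{1b1}=\bar x_{1b2}=0$ and the distances are as follows. (a) If $\lambda a_{b1}=(1-\lambda)a_{b2}<0$, then $$\rho_{1b1}=\rho_{1b2}=\frac{1}{-4\mu\lambda a_{b1}}\Bigl(1+\sqrt{1+(4\mu\lambda a_{b1}b)^2}\Bigr).$$ (b) If $\lambda a_{b1}\neq(1-\lambda)a_{b2}$ and $\lambda a_{b1}+(1-\lambda)a_{b2}<0$, then $\rho_{1b1}=(\rho_{1b+}-\rho_{1b-})/2$ and $\rho_{1b2}=(\rho_{1b+}+\rho_{1b-})/2$, where $$\rho_{1b+}=\frac{1+\sqrt{1+\bigl[2b\mu(\lambda a_{b1}+(1-\lambda)a_{b2})\bigr]^2}}{-\mu\bigl(\lambda a_{b1}+(1-\lambda)a_{b2}\bigr)},\qquad \rho_{1b-}=\frac{-1+\sqrt{1+\bigl[2b\mu(\lambda a_{b1}-(1-\lambda)a_{b2})\bigr]^2}}{-\mu\bigl(\lambda a_{b1}-(1-\lambda)a_{b2}\bigr)}.$$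
   Context: Configuration I: two fixed beacons at $\mathbf r_{b1}=(0,0,-b)$ and $\mathbf r_{b2}=(0,0,b)$ in $\mathbb R^3$, and one agent with position $\mathbf r_1\in\mathbb R^3$ and unit velocity $\mathbf x_1$. Write $\mathbf r_{1bi}=\mathbf r_1-\mathbf r_{bi}$, $\rho_{1bi}=|\mathbf r_{1bi}|$, $\bar x_{1bi}=\mathbf x_1\cdot \mathbf r_{1bi}/\rho_{1bi}$ ($i=1,2$). The agent moves with unit speed under the beacon-referenced constant-bearing control law, whose closed loop is $$\dot{\mathbf r}_1=\mathbf x_1,\qquad \dot{\mathbf x}_1=-(1-\lambda)\mu(\bar x_{1b2}-a_{b2})\Bigl(\tfrac{\mathbf r_{1b2}}{\rho_{1b2}}-\bar x_{1b2}\mathbf x_1\Bigr)-\lambda\mu(\bar x_{1b1}-a_{b1})\Bigl(\tfrac{\mathbf r_{1b1}}{\rho_{1b1}}-\bar x_{1b1}\mathbf x_1\Bigr).$$ Here $\mu>0$ is a gain, $\lambda$ an attention weight and $a_{b1},a_{b2}$ the constant-bearing parameters with respect to the two beacons. The time derivatives of $\bar x_{1b1},\bar x_{1b2},\rho_{1b1},\rho_{1b2}$ along this flow depend only on these four variables (using $\frac{\mathbf r_{1b1}}{\rho_{1b1}}\cdot\frac{\mathbf r_{1b2}}{\rho_{1b2}}=\frac{\rho_{1b1}^2+\rho_{1b2}^2-4b^2}{2\rho_{1b1}\rho_{1b2}}$). *)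

(* Defs.v *)
From Stdlib Require Import Reals Lra.
Open Scope R_scope.

Record vec3 : Type := mkV { vx : R; vy : R; vz : R }.

Definition vadd (u v : vec3) : vec3 := mkV (vx u + vx v) (vy u + vy v) (vz u + vz v).
Definition vsub (u v : vec3) : vec3 := mkV (vx u - vx v) (vy u - vy v) (vz u - vz v).
Definition vscale (k : R) (v : vec3) : vec3 := mkV (k * vx v) (k * vy v) (k * vz v).
Definition vdot (u v : vec3) : R := vx u * vx v + vy u * vy v + vz u * vz v.
Definition vnorm (v : vec3) : R := sqrt (vdot v v).
Definition vcross (u v : vec3) : vec3 :=
  mkV (vy u * vz v - vz u * vy v) (vz u * vx v - vx u * vz v) (vx u * vy v - vy u * vx v).
Definition vzero : vec3 := mkV 0 0 0.

Definition collinear (p q s : vec3) : Prop := vcross (vsub q p) (vsub s p) = vzero.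

Definition rb1 (b : R) : vec3 := mkV 0 0 (- b).
Definition rb2 (b : R) : vec3 := mkV 0 0 b.

Section Shape.
Variables (b : R) (r1 x1 : vec3).

Definition r1b1 : vec3 := vsub r1 (rb1 b).
Definition r1b2 : vec3 := vsub r1 (rb2 b).
Definition rho1b1 : R := vnorm r1b1.
Definition rho1b2 : R := vnorm r1b2.
Definition u1b1 : vec3 := vscale (/ rho1b1) r1b1.
Definition u1b2 : vec3 := vscale (/ rho1b2) r1b2.
Definition xbar1b1 : R := vdot x1 u1b1.
Definition xbar1b2 : R := vdot x1 u1b2.
End Shape.

Definition x1dot (mu lam ab1 ab2 b : R) (r1 x1 : vec3) : vec3 :=
  vadd
    (vscale (- ((1 - lam) * mu * (xbar1b2 b r1 x1 - ab2)))
       (vsub (u1b2 b r1) (vscale (xbar1b2 b r1 x1) x1)))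
    (vscale (- (lam * mu * (xbar1b1 b r1 x1 - ab1)))
       (vsub (u1b1 b r1) (vscale (xbar1b1 b r1 x1) x1))).

(** Time derivatives of the shape variables along the flow
    (r1' = x1, x1' = x1dot), computed by the chain rule:
      d/dt rho_i  = (r_{1bi} . r1') / rho_i = x1 . u_i
      d/dt u_i    = (r1' - rho_i' u_i) / rho_i
      d/dt xbar_i = x1' . u_i + x1 . (d/dt u_i). *)
Definition rho1b1_dot (b : R) (r1 x1 : vec3) : R := vdot x1 (u1b1 b r1).
Definition rho1b2_dot (b : R) (r1 x1 : vec3) : R := vdot x1 (u1b2 b r1).

Definition u1b1_dot (b : R) (r1 x1 : vec3) : vec3 :=
  vscale (/ rho1b1 b r1) (vsub x1 (vscale (rho1b1_dot b r1 x1) (u1b1 b r1))).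
Definition u1b2_dot (b : R) (r1 x1 : vec3) : vec3 :=
  vscale (/ rho1b2 b r1) (vsub x1 (vscale (rho1b2_dot b r1 x1) (u1b2 b r1))).

Definition xbar1b1_dot (mu lam ab1 ab2 b : R) (r1 x1 : vec3) : R :=
  vdot (x1dot mu lam ab1 ab2 b r1 x1) (u1b1 b r1) + vdot x1 (u1b1_dot b r1 x1).
Definition xbar1b2_dot (mu lam ab1 ab2 b : R) (r1 x1 : vec3) : R :=
  vdot (x1dot mu lam ab1 ab2 b r1 x1) (u1b2 b r1) + vdot x1 (u1b2_dot b r1 x1).

Definition circling_equilibrium (mu lam ab1 ab2 b : R) (r1 x1 : vec3) : Prop :=
  vnorm x1 = 1 /\
  0 < rho1b1 b r1 /\ 0 < rho1b2 b r1 /\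
  ~ collinear r1 (rb1 b) (rb2 b) /\
  xbar1b1_dot mu lam ab1 ab2 b r1 x1 = 0 /\
  xbar1b2_dot mu lam ab1 ab2 b r1 x1 = 0 /\
  rho1b1_dot b r1 x1 = 0 /\
  rho1b2_dot b r1 x1 = 0.

(* Main.v *)
Require Import Defs.
From Stdlib Require Import Reals Lra Psatz.
Open Scope R_scope.

Lemma vdot_nonneg v : 0 <= vdot v v.
Proof. destruct v; unfold vdot; simpl; nra. Qed.

Lemma vnorm_sq v : vnorm v ^ 2 = vdot v v.
Proof. unfold vnorm. rewrite pow2_sqrt; auto using vdot_nonneg. Qed.

Lemma alg1 (lam mu ab1 ab2 p1 p2 : R) (x a c : vec3) :
  vdot x x = 1 -> p1 ^ 2 = vdot a a -> 0 < p1 -> 0 < p2 ->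
  (vdot (vadd (vscale (-((1-lam)*mu*(0-ab2))) (vsub (vscale (/p2) c) (vscale 0 x)))
              (vscale (-(lam*mu*(0-ab1))) (vsub (vscale (/p1) a) (vscale 0 x))))
        (vscale (/p1) a)
   + vdot x (vscale (/p1) (vsub x (vscale 0 (vscale (/p1) a))))) * (p1 * p2)
  = (1-lam)*ab2*mu*vdot a c + lam*ab1*mu*(p1*p2) + p2.
Proof.
  intros Hx Ha H1 H2.
  destruct x as [x1 x2 x3], a as [a1 a2 a3], c as [c1 c2 c3].
  unfold vdot, vadd, vscale, vsub in *; simpl in *.
  transitivity ((1-lam)*ab2*mu*(a1*c1+a2*c2+a3*c3) + lam*ab1*mu*(a1*a1+a2*a2+a3*a3)*p2/p1
     + (x1*x1+x2*x2+x3*x3)*p2).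
  { field. lra. }
  rewrite Hx, <- Ha. field. lra.
Qed.

Lemma gen1 mu lam ab1 ab2 b r1 x1 :
  vdot x1 x1 = 1 -> 0 < rho1b1 b r1 -> 0 < rho1b2 b r1 ->
  xbar1b1 b r1 x1 = 0 -> xbar1b2 b r1 x1 = 0 ->
  xbar1b1_dot mu lam ab1 ab2 b r1 x1 * (rho1b1 b r1 * rho1b2 b r1)
  = (1-lam)*ab2*mu*vdot (r1b1 b r1) (r1b2 b r1) + lam*ab1*mu*(rho1b1 b r1 * rho1b2 b r1) + rho1b2 b r1.
Proof.
  intros Hx H1 H2 X1 X2.
  assert (Ha : rho1b1 b r1 ^ 2 = vdot (r1b1 b r1) (r1b1 b r1)) by apply vnorm_sq.
  unfold xbar1b1_dot, x1dot, u1b1_dot, rho1b1_dot.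
  change (vdot x1 (u1b1 b r1)) with (xbar1b1 b r1 x1).
  rewrite X1, X2. unfold u1b1, u1b2. clear X1 X2.
  revert Ha H1 H2.
  generalize (rho1b1 b r1) (rho1b2 b r1) (r1b1 b r1) (r1b2 b r1).
  intros p1 p2 a c Ha H1 H2. apply alg1; auto.
Qed.

Lemma gen2 mu lam ab1 ab2 b r1 x1 :
  vdot x1 x1 = 1 -> 0 < rho1b1 b r1 -> 0 < rho1b2 b r1 ->
  xbar1b1 b r1 x1 = 0 -> xbar1b2 b r1 x1 = 0 ->
  xbar1b2_dot mu lam ab1 ab2 b r1 x1 * (rho1b1 b r1 * rho1b2 b r1)
  = lam*ab1*mu*vdot (r1b1 b r1) (r1b2 b r1) + (1-lam)*ab2*mu*(rho1b1 b r1 * rho1b2 b r1) + rho1b1 b r1.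
Proof.
  intros Hx H1 H2 X1 X2.
  assert (Ha : rho1b2 b r1 ^ 2 = vdot (r1b2 b r1) (r1b2 b r1)) by apply vnorm_sq.
  unfold xbar1b2_dot, x1dot, u1b2_dot, rho1b2_dot.
  change (vdot x1 (u1b2 b r1)) with (xbar1b2 b r1 x1).
  rewrite X1, X2. unfold u1b1, u1b2. clear X1 X2.
  revert Ha H1 H2.
  generalize (rho1b1 b r1) (rho1b2 b r1) (r1b1 b r1) (r1b2 b r1).
  intros p1 p2 a c Ha H1 H2.
  destruct x1 as [x1 x2 x3], a as [a1 a2 a3], c as [c1 c2 c3].
  unfold vdot, vadd, vscale, vsub in *; simpl in *.
  transitivity (lam*ab1*mu*(a1*c1+a2*c2+a3*c3) + (1-lam)*ab2*mu*(c1*c1+c2*c2+c3*c3)*p1/p2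
     + (x1*x1+x2*x2+x3*x3)*p1).
  { field. lra. }
  rewrite Hx, <- Ha. field. lra.
Qed.

Lemma core_fwd mu A B b p1 p2 P :
  0 < mu -> 0 < b -> 0 < p1 -> 0 < p2 ->
  p1^2 + p2^2 - 2*P = 4*b^2 -> P^2 < (p1*p2)^2 ->
  B*mu*P + A*mu*(p1*p2) + p2 = 0 -> A*mu*P + B*mu*(p1*p2) + p1 = 0 ->
  A + B < 0 /\ (A = B -> p1 = p2) /\
  sqrt (1 + (2*b*mu*(A+B))^2) = -mu*(A+B)*(p1+p2) - 1 /\
  (A <> B -> sqrt (1 + (2*b*mu*(A-B))^2) = 1 - mu*(A-B)*(p2-p1)).
Proof.
  intros Hmu Hb H1 H2 HP HL E1 E2.
  assert (Hpp : 0 < p1*p2) by nra.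
  assert (HQ : 0 < P + p1*p2) by nra.
  assert (HR : 0 < p1*p2 - P) by nra.
  assert (Es : mu*(A+B)*(P+p1*p2) = -(p1+p2)) by lra.
  assert (Ed : mu*(A-B)*(p1*p2-P) = p1-p2) by lra.
  assert (HAB : A + B < 0).
  { destruct (Rlt_or_le (A+B) 0) as [h|h]; auto.
    assert (0 <= mu*(A+B)*(P+p1*p2)).
    { apply Rmult_le_pos; [apply Rmult_le_pos|]; lra. }
    lra. }
  set (k := -mu*(A+B)).
  assert (Hk : 0 < k) by (unfold k; nra).
  set (s := p1+p2).
  assert (Hks : k*(s^2 - 4*b^2) = 2*s).
  { unfold k, s. replace ((p1+p2)^2 - 4*b^2) with (2*(P+p1*p2)) by lra. nra. }
  assert (Hks2 : 2 < k*s).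
  { assert (E : k*s^2 - 2*s = 4*b^2*k) by nra.
    assert (0 < 4*b^2*k) by (apply Rmult_lt_0_compat; nra).
    assert (s*(k*s - 2) > 0) by (replace (s*(k*s-2)) with (k*s^2-2*s) by ring; lra).
    assert (0 < s) by (unfold s; lra).
    destruct (Rlt_or_le 2 (k*s)) as [h|h]; auto.
    assert (s*(k*s-2) <= 0) by nra. lra. }
  split; [exact HAB|]. split.
  { intro Heq. rewrite Heq in Ed. replace (B-B) with 0 in Ed by ring. lra. }
  split.
  { rewrite <- (sqrt_pow2 (k*s - 1)) by lra. f_equal.
    replace ((2*b*mu*(A+B))^2) with (4*b^2*k^2) by (unfold k; ring).
    nra. }
  intro Hne.
  set (m := mu*(A-B)). set (d := p2 - p1).
  assert (Hm : m*(4*b^2 - d^2) = -2*d).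
  { unfold m, d. replace (4*b^2 - (p2-p1)^2) with (2*(p1*p2-P)) by lra. nra. }
  assert (Hmd : m*d <= 0).
  { assert (d = - m*(p1*p2-P)) by (unfold d, m; lra).
    rewrite H. assert (0 <= m*m*(p1*p2-P)) by (apply Rmult_le_pos; nra). nra. }
  rewrite <- (sqrt_pow2 (1 - m*d)) by lra. f_equal.
  replace ((2*b*mu*(A-B))^2) with (4*b^2*m^2) by (unfold m; ring).
  assert (HH : m*(m*(4*b^2-d^2)) = m*(-2*d)) by (rewrite Hm; ring).
  ring_simplify in HH. ring_simplify. lra.
Qed.

Lemma core_bwd mu A B b :
  0 < mu -> 0 < b -> A + B < 0 ->
  exists p1 p2, 0 < p1 /\ 0 < p2 /\ (p1-p2)^2 < 4*b^2 /\ 4*b^2 < (p1+p2)^2 /\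
   B*mu*((p1^2+p2^2-4*b^2)/2) + A*mu*(p1*p2) + p2 = 0 /\
   A*mu*((p1^2+p2^2-4*b^2)/2) + B*mu*(p1*p2) + p1 = 0.
Proof.
  intros Hmu Hb HAB.
  set (k := -mu*(A+B)).
  assert (Hk : 0 < k) by (unfold k; nra).
  set (S1 := sqrt (1 + 4*b^2*k^2)).
  assert (HS1 : S1^2 = 1 + 4*b^2*k^2) by (unfold S1; apply pow2_sqrt; nra).
  assert (HS1p : 0 <= S1) by (unfold S1; apply sqrt_pos).
  set (s := (1 + S1)/k).
  assert (Hs : k*s = 1 + S1) by (unfold s; field; lra).
  assert (Es : k*(s^2 - 4*b^2) = 2*s).
  { assert (HH : k*(k*(s^2-4*b^2)) = k*(2*s)).
    { replace (k*(k*(s^2-4*b^2))) with ((k*s)^2 - 4*b^2*k^2) by ring.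
      rewrite Hs. replace (k*(2*s)) with (2*(k*s)) by ring. rewrite Hs. nra. }
    apply Rmult_eq_reg_l in HH; lra. }
  assert (Hs2 : 4*b^2 < s^2).
  { assert (0 < s) by (unfold s; apply Rdiv_lt_0_compat; lra).
    assert (0 < k*(s^2-4*b^2)) by lra.
    destruct (Rlt_or_le (4*b^2) (s^2)) as [h|h]; auto.
    assert (k*(s^2-4*b^2) <= 0) by nra. lra. }
  set (m := mu*(A-B)).
  assert (Hd : exists d, d^2 < 4*b^2 /\ m*(4*b^2-d^2) = -2*d).
  { destruct (Req_dec m 0) as [Hm0|Hm0].
    { exists 0. rewrite Hm0. split; [nra|ring]. }
    set (S2 := sqrt (1 + 4*b^2*m^2)).
    assert (HS2 : S2^2 = 1 + 4*b^2*m^2) by (unfold S2; apply pow2_sqrt; nra).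
    assert (HS2p : 0 <= S2) by (unfold S2; apply sqrt_pos).
    assert (Hm2 : 0 < m^2) by (simpl; rewrite Rmult_1_r; apply Rsqr_pos_lt; auto).
    assert (HS2g : 1 < S2).
    { assert (0 < 4*b^2*m^2) by (apply Rmult_lt_0_compat; nra).
      destruct (Rlt_or_le 1 S2) as [h|h]; auto.
      assert (S2^2 <= 1) by (simpl; nra). lra. }
    exists ((1 - S2)/m).
    assert (Hmd : m*((1-S2)/m) = 1 - S2) by (field; auto).
    split.
    { apply (Rmult_lt_reg_l (m^2)); auto.
      replace (m^2*((1-S2)/m)^2) with ((m*((1-S2)/m))^2) by ring.
      rewrite Hmd. nra. }
    apply (Rmult_eq_reg_l m); auto.
    replace (m*(m*(4*b^2-((1-S2)/m)^2))) with (4*b^2*m^2 - (m*((1-S2)/m))^2) by ring.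
    replace (m*(-2*((1-S2)/m))) with (-2*(m*((1-S2)/m))) by ring.
    rewrite Hmd. nra. }
  destruct Hd as [d [Hd1 Hd2]].
  assert (Hd3 : -2*b < d < 2*b) by nra.
  assert (Hs3 : 2*b < s).
  { assert (0 < s) by (unfold s; apply Rdiv_lt_0_compat; lra). nra. }
  exists ((s-d)/2), ((s+d)/2).
  split; [lra|]. split; [lra|].
  split. { replace ((s-d)/2 - (s+d)/2) with (-d) by field. nra. }
  split. { replace ((s-d)/2 + (s+d)/2) with s by field. nra. }
  unfold k, m in *.
  split.
  - replace (B * mu * ((((s - d) / 2) ^ 2 + ((s + d) / 2) ^ 2 - 4 * b ^ 2) / 2) +
      A * mu * ((s - d) / 2 * ((s + d) / 2)) + (s + d) / 2)
      with ((mu*(A+B)*(s^2-4*b^2) + mu*(A-B)*(4*b^2-d^2) + 2*(s+d))/4) by field.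
    replace (mu*(A+B)*(s^2-4*b^2)) with (-(-mu*(A+B)*(s^2-4*b^2))) by ring.
    rewrite Es, Hd2. field.
  - replace (A * mu * ((((s - d) / 2) ^ 2 + ((s + d) / 2) ^ 2 - 4 * b ^ 2) / 2) +
      B * mu * ((s - d) / 2 * ((s + d) / 2)) + (s - d) / 2)
      with ((mu*(A+B)*(s^2-4*b^2) - mu*(A-B)*(4*b^2-d^2) + 2*(s-d))/4) by field.
    replace (mu*(A+B)*(s^2-4*b^2)) with (-(-mu*(A+B)*(s^2-4*b^2))) by ring.
    rewrite Es, Hd2. field.
Qed.

Lemma geom_sum b r1 :
  rho1b1 b r1 ^ 2 + rho1b2 b r1 ^ 2 - 2 * vdot (r1b1 b r1) (r1b2 b r1) = 4*b^2.
Proof.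
  unfold rho1b1, rho1b2. rewrite !vnorm_sq.
  destruct r1; unfold r1b1, r1b2, rb1, rb2, vdot, vsub; simpl; ring.
Qed.

Lemma geom_lag b r1 :
  ~ collinear r1 (rb1 b) (rb2 b) ->
  vdot (r1b1 b r1) (r1b2 b r1) ^ 2 < (rho1b1 b r1 * rho1b2 b r1) ^ 2.
Proof.
  intro Hnc.
  rewrite Rpow_mult_distr. unfold rho1b1, rho1b2. rewrite !vnorm_sq.
  destruct r1 as [x y z]. unfold collinear in Hnc.
  unfold r1b1, r1b2, rb1, rb2, vdot, vsub in *; simpl in *.
  unfold vcross, vsub, vzero in Hnc; simpl in Hnc.
  set (c1 := (0 - y) * (b - z) - (- b - z) * (0 - y)) in *.
  set (c2 := (- b - z) * (0 - x) - (0 - x) * (b - z)) in *.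
  set (c3 := (0 - x) * (0 - y) - (0 - y) * (0 - x)) in *.
  assert (E : ((x - 0) * (x - 0) + (y - 0) * (y - 0) + (z - - b) * (z - - b)) *
    ((x - 0) * (x - 0) + (y - 0) * (y - 0) + (z - b) * (z - b)) -
    ((x - 0) * (x - 0) + (y - 0) * (y - 0) + (z - - b) * (z - b)) ^ 2
    = c1^2 + c2^2 + c3^2) by (unfold c1, c2, c3; ring).
  assert (0 < c1^2 + c2^2 + c3^2).
  { destruct (Req_dec c1 0) as [h1|h1]; [destruct (Req_dec c2 0) as [h2|h2];
      [destruct (Req_dec c3 0) as [h3|h3]|]|].
    - exfalso. apply Hnc. rewrite h1, h2, h3. reflexivity.
    - assert (0 < c3^2) by (simpl; rewrite Rmult_1_r; apply Rsqr_pos_lt; auto). nra.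
    - assert (0 < c2^2) by (simpl; rewrite Rmult_1_r; apply Rsqr_pos_lt; auto). nra.
    - assert (0 < c1^2) by (simpl; rewrite Rmult_1_r; apply Rsqr_pos_lt; auto). nra. }
  lra.
Qed.

Lemma bwd mu lam ab1 ab2 b : 0 < mu -> 0 < b -> lam*ab1 + (1-lam)*ab2 < 0 ->
  exists r1 x1, circling_equilibrium mu lam ab1 ab2 b r1 x1.
Proof.
  intros Hmu Hb HAB.
  destruct (core_bwd mu (lam*ab1) ((1-lam)*ab2) b Hmu Hb HAB)
    as [p1 [p2 [H1 [H2 [Hd [Hs [E1 E2]]]]]]].
  set (Z := (p1^2 - p2^2)/(4*b)).
  assert (Htri : 0 < p1^2 - (Z+b)^2).
  { assert (E : 16*b^2*(p1^2 - (Z+b)^2) = ((p1+p2)^2-4*b^2)*(4*b^2-(p1-p2)^2))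
      by (unfold Z; field; lra).
    assert (0 < ((p1+p2)^2-4*b^2)*(4*b^2-(p1-p2)^2)) by (apply Rmult_lt_0_compat; lra).
    assert (0 < 16*b^2) by nra.
    destruct (Rlt_or_le 0 (p1^2 - (Z+b)^2)) as [h|h]; auto.
    assert (16*b^2*(p1^2 - (Z+b)^2) <= 0) by nra. lra. }
  set (X := sqrt (p1^2 - (Z+b)^2)).
  assert (HX : X*X = p1^2 - (Z+b)^2) by (unfold X; apply sqrt_sqrt; lra).
  assert (HXp : 0 < X) by (unfold X; apply sqrt_lt_R0; lra).
  assert (R1 : rho1b1 b (mkV X 0 Z) = p1).
  { unfold rho1b1, vnorm, r1b1, rb1, vdot, vsub; simpl.
    rewrite <- (sqrt_pow2 p1) by lra. f_equal.
    replace ((X - 0) * (X - 0) + (0 - 0) * (0 - 0) + (Z - - b) * (Z - - b))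
      with (X*X + (Z+b)^2) by ring. rewrite HX. ring. }
  assert (R2 : rho1b2 b (mkV X 0 Z) = p2).
  { unfold rho1b2, vnorm, r1b2, rb2, vdot, vsub; simpl.
    rewrite <- (sqrt_pow2 p2) by lra. f_equal.
    replace ((X - 0) * (X - 0) + (0 - 0) * (0 - 0) + (Z - b) * (Z - b))
      with (X*X + (Z-b)^2) by ring. rewrite HX. unfold Z. field. lra. }
  assert (HP : vdot (r1b1 b (mkV X 0 Z)) (r1b2 b (mkV X 0 Z)) = (p1^2+p2^2-4*b^2)/2).
  { pose proof (geom_sum b (mkV X 0 Z)) as G. rewrite R1, R2 in G. lra. }
  exists (mkV X 0 Z), (mkV 0 1 0).
  assert (Hx : vdot (mkV 0 1 0) (mkV 0 1 0) = 1) by (unfold vdot; simpl; ring).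
  assert (Q1 : rho1b1_dot b (mkV X 0 Z) (mkV 0 1 0) = 0).
  { unfold rho1b1_dot, u1b1, r1b1, rb1, vdot, vscale, vsub; simpl; ring. }
  assert (Q2 : rho1b2_dot b (mkV X 0 Z) (mkV 0 1 0) = 0).
  { unfold rho1b2_dot, u1b2, r1b2, rb2, vdot, vscale, vsub; simpl; ring. }
  assert (Hp1 : 0 < rho1b1 b (mkV X 0 Z)) by (rewrite R1; lra).
  assert (Hp2 : 0 < rho1b2 b (mkV X 0 Z)) by (rewrite R2; lra).
  pose proof (gen1 mu lam ab1 ab2 b _ _ Hx Hp1 Hp2 Q1 Q2) as G1.
  pose proof (gen2 mu lam ab1 ab2 b _ _ Hx Hp1 Hp2 Q1 Q2) as G2.
  rewrite HP, R1, R2 in G1, G2.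
  assert (Hpp : p1*p2 <> 0) by nra.
  unfold circling_equilibrium.
  split. { unfold vnorm. rewrite Hx. apply sqrt_1. }
  split; [exact Hp1|]. split; [exact Hp2|].
  split.
  { unfold collinear, vcross, vsub, rb1, rb2, vzero; simpl. intro Hc.
    apply (f_equal vy) in Hc. simpl in Hc. nra. }
  split.
  { apply (Rmult_eq_reg_r (p1*p2)); auto. rewrite G1. lra. }
  split.
  { apply (Rmult_eq_reg_r (p1*p2)); auto. rewrite G2. lra. }
  split; assumption.
Qed.

Lemma vnorm1 x : vnorm x = 1 -> vdot x x = 1.
Proof. intro H. rewrite <- vnorm_sq, H. ring. Qed.

Theorem proposition3p1 (mu lam ab1 ab2 b : R)
  (Hmu : 0 < mu) (Hlam : 0 < lam < 1)
  (Ha1 : -1 <= ab1 <= 1) (Ha2 : -1 <= ab2 <= 1) (Hb : 0 < b) :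
  ((exists r1 x1 : vec3, circling_equilibrium mu lam ab1 ab2 b r1 x1) <->
     ((lam * ab1 = (1 - lam) * ab2 /\ lam * ab1 < 0) \/
      (lam * ab1 <> (1 - lam) * ab2 /\ lam * ab1 + (1 - lam) * ab2 < 0)))
  /\
  (forall r1 x1 : vec3, circling_equilibrium mu lam ab1 ab2 b r1 x1 ->
     xbar1b1 b r1 x1 = 0 /\ xbar1b2 b r1 x1 = 0 /\
     ((lam * ab1 = (1 - lam) * ab2 /\ lam * ab1 < 0) ->
        rho1b1 b r1 = / (- 4 * mu * lam * ab1) * (1 + sqrt (1 + (4 * mu * lam * ab1 * b) ^ 2)) /\
        rho1b2 b r1 = / (- 4 * mu * lam * ab1) * (1 + sqrt (1 + (4 * mu * lam * ab1 * b) ^ 2))) /\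
     ((lam * ab1 <> (1 - lam) * ab2 /\ lam * ab1 + (1 - lam) * ab2 < 0) ->
        let rp := (1 + sqrt (1 + (2 * b * mu * (lam * ab1 + (1 - lam) * ab2)) ^ 2))
                  / (- mu * (lam * ab1 + (1 - lam) * ab2)) in
        let rm := (-1 + sqrt (1 + (2 * b * mu * (lam * ab1 - (1 - lam) * ab2)) ^ 2))
                  / (- mu * (lam * ab1 - (1 - lam) * ab2)) in
        rho1b1 b r1 = (rp - rm) / 2 /\ rho1b2 b r1 = (rp + rm) / 2)).
Proof.
  assert (FWD : forall r1 x1, circling_equilibrium mu lam ab1 ab2 b r1 x1 ->
    xbar1b1 b r1 x1 = 0 /\ xbar1b2 b r1 x1 = 0 /\
    let A := lam*ab1 in let B := (1-lam)*ab2 in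
    let p1 := rho1b1 b r1 in let p2 := rho1b2 b r1 in
    0 < p1 /\ 0 < p2 /\
    A + B < 0 /\ (A = B -> p1 = p2) /\
    sqrt (1 + (2*b*mu*(A+B))^2) = -mu*(A+B)*(p1+p2) - 1 /\
    (A <> B -> sqrt (1 + (2*b*mu*(A-B))^2) = 1 - mu*(A-B)*(p2-p1))).
  { intros r1 x1 [Hx [Hp1 [Hp2 [Hnc [Hd1 [Hd2 [Hr1 Hr2]]]]]]].
    assert (X1 : xbar1b1 b r1 x1 = 0) by exact Hr1.
    assert (X2 : xbar1b2 b r1 x1 = 0) by exact Hr2.
    apply vnorm1 in Hx.
    pose proof (gen1 mu lam ab1 ab2 b r1 x1 Hx Hp1 Hp2 X1 X2) as E1.
    pose proof (gen2 mu lam ab1 ab2 b r1 x1 Hx Hp1 Hp2 X1 X2) as E2.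
    rewrite Hd1 in E1. rewrite Hd2 in E2.
    split; [exact X1|]. split; [exact X2|].
    cbv zeta. split; [exact Hp1|]. split; [exact Hp2|].
    apply (core_fwd mu (lam*ab1) ((1-lam)*ab2) b _ _ (vdot (r1b1 b r1) (r1b2 b r1)));
      auto.
    - pose proof (geom_sum b r1). lra.
    - apply geom_lag; auto.
    - lra.
    - lra. }
  split.
  - split.
    + intros [r1 [x1 H]]. destruct (FWD r1 x1 H) as [_ [_ [_ [_ [HAB _]]]]].
      destruct (Req_dec (lam*ab1) ((1-lam)*ab2)); [left|right]; split; auto; lra.
    + intro HC.
      assert (HAB : lam*ab1 + (1-lam)*ab2 < 0) by (destruct HC as [[h1 h2]|[h1 h2]]; lra).
      apply bwd; auto.
  - intros r1 x1 H. destruct (FWD r1 x1 H) as [X1 [X2 [Hp1 [Hp2 [HAB [Heq [Hs Hd]]]]]]].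
    split; [exact X1|]. split; [exact X2|]. split.
    + intros [Hq HA].
      replace (4 * mu * lam * ab1 * b) with (2*b*mu*(lam*ab1 + (1-lam)*ab2))
        by (rewrite <- Hq; ring).
      rewrite Hs. rewrite <- (Heq Hq). rewrite <- Hq.
      split; field; nra.
    + intros [Hne HA]. cbv zeta. rewrite Hs, (Hd Hne).
      assert (lam*ab1 - (1-lam)*ab2 <> 0) by lra.
      split; field; split; nra.
Qed.
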